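(* Let $A$ be a circular $m\times n$ matrix, $\alpha$ a positive integer and $x^*\in Q(A,\alpha\mathbf{1})$. Then for every $i\in[m]$, in $D(A,x^* )$ (with $b=\alpha\mathbf{1}$): (i) $c^+_i(x^* )-c^+(P_i^+,x^* )=-\mu\alpha$, where $c^+(P_i^+,x^* )=\sum_{j=\ell_i}^{\ell_i+k_i-1}c^+_{m+j}(x^* )$ is the cost of the path $P_i^+$ of forward short arcs from $\ell_i-1$ to $\ell_i+k_i-1$; (ii) $c^-_i(x^* )-c^-(P_i^-,x^* )=-(1-\mu)\alpha$, where $c^-(P_i^-,x^* )=\sum_{j=\ell_i}^{\ell_i+k_i-1}c^-_{m+j}(x^* )$ is the cost of the path $P_i^-$ of reverse short arcs from $\ell_i+k_i-1$ to $\ell_i-1$. (Column indices $j$ are taken modulo $n$ in $[n]$.)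
   Context: Notation: $[n]=\{1,\dots,n\}$ with addition mod $n$ (index $0$ identified with $n$); for $a,c\in[n]$ with $t\ge0$ minimal such that $a+t\equiv c\pmod n$, $[a,c)_n=\{a,\dots,a+t-1\}$ (mod $n$). An $m\times n$ $\{0,1\}$-matrix $A$ is circular if for each row $i$ there are $\ell_i\in[n]$ and an integer $2\le k_i\le n-1$ with row $i$ the incidence vector of $[\ell_i,\ell_i+k_i)_n$. $Q(A,b)=\{x\ge0:Ax\ge b\}$. $D(A)$: node set $[n]$ (labels mod $n$); forward arcs $a_i=(\ell_i-1,\ell_i+k_i-1)$ ($i\in[m]$) and $a_{m+j}=(j-1,j)$ ($j\in[n]$); reverse arcs $\bar a_i=(\ell_i+k_i-1,\ell_i-1)$ and $\bar a_{m+j}=(j,j-1)$. Costs: $\tilde A=\binom{A}{I}$ ($I$ the $n\times n$ identity), $d=\binom{b}{0}$, $v$ = last column of $\tilde A$; for $x^*\in Q(A,b)$: $s^*=\tilde Ax^*-d$, $\mu=\lceil\mathbf{1}^Tx^*\rceil-\mathbf{1}^Tx^*$, $c^+(x^* )=\mu(s^*-(1-\mu)v)$, $c^-(x^* )=(1-\mu)(s^*+\mu v)$. In $D(A,x^* )$ arc $a_k$ ($k\in[m+n]$) has cost $c^+_k(x^* )$ and arc $\bar a_k$ has cost $c^-_k(x^* )$; the cost of a path is the sum of its arc costs. *)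

(* Defs.v *)
From HB Require Import structures.
From mathcomp Require Import all_boot all_order all_algebra.
From mathcomp Require Import reals.
Set Implicit Arguments. Unset Strict Implicit. Unset Printing Implicit Defensive.
Import Order.TTheory GRing.Theory Num.Theory.
Local Open Scope ring_scope.

(* Conventions: column label c in [n] = {1..n} is represented by the ordinal
   c-1 : 'I_n.  In 'I_(m+n), the index
   k in [m+n] (arc a_k) is (lshift n i) for k = i+1 <= m and (rshift m j) for
   k = m + (j+1). *)

Lemma ord_pos (n : nat) (j : 'I_n) : (0 < n)%N.
Proof. by case: j => j /= /(leq_ltn_trans (leq0n j)). Qed.

Definition addmod (n : nat) (j : 'I_n) (t : nat) : 'I_n :=
  Ordinal (ltn_pmod (j + t) (ord_pos j)).

(* A is circular with row i the incidence vector of [l_i, l_i + k_i)_n, where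
   l_i = (ell i) + 1, i.e. ell i is the ordinal of column label l_i. *)
Definition circular_wrt (R : numDomainType) (m n : nat) (A : 'M[R]_(m, n))
  (ell : 'I_m -> 'I_n) (k : 'I_m -> nat) : Prop :=
  forall i : 'I_m,
    [/\ (2 <= k i)%N, (k i <= n - 1)%N &
        forall j : 'I_n,
          A i j = if [exists t : 'I_(k i), addmod (ell i) t == j] then 1 else 0].

Definition inQ (R : numDomainType) (m n : nat) (A : 'M[R]_(m, n))
  (b : 'cV[R]_m) (x : 'cV[R]_n) : Prop :=
  (forall j, 0 <= x j 0) /\ (forall i, b i 0 <= (A *m x) i 0).

Section Costs.
Variables (R : realType) (m n : nat) (A : 'M[R]_(m, n)) (b : 'cV[R]_m).

Definition Atil : 'M[R]_(m + n, n) := col_mx A 1%:M.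
Definition dvec : 'cV[R]_(m + n) := col_mx b 0.
Definition vlast : 'cV[R]_(m + n) :=
  \col_r (match [pick j : 'I_n | (j.+1 == n)%N] with
          | Some j => Atil r j | None => 0 end).

Definition svec (x : 'cV[R]_n) : 'cV[R]_(m + n) := Atil *m x - dvec.
Definition sumx (x : 'cV[R]_n) : R := \sum_(j < n) x j 0.
Definition mu (x : 'cV[R]_n) : R := (Num.ceil (sumx x))%:~R - sumx x.

Definition cplus (x : 'cV[R]_n) : 'cV[R]_(m + n) :=
  mu x *: (svec x - (1 - mu x) *: vlast).
Definition cminus (x : 'cV[R]_n) : 'cV[R]_(m + n) :=
  (1 - mu x) *: (svec x + mu x *: vlast).
End Costs.

(* Main.v *)
Require Import Defs.
From HB Require Import structures.
From mathcomp Require Import all_boot all_order all_algebra.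
From mathcomp Require Import reals ring.
Import Order.TTheory GRing.Theory Num.Theory.
Local Open Scope ring_scope.

Section S.
Variables (R : realType) (m n : nat) (A : 'M[R]_(m, n)) (b : 'cV[R]_m) (x : 'cV[R]_n).

Lemma svec_l i : svec A b x (lshift n i) 0 = (A *m x) i 0 - b i 0.
Proof. rewrite /svec /Atil /dvec mul_col_mx !mxE -[lshift n i]/(unsplit (inl i)) unsplitK. by rewrite mxE. Qed.
Lemma svec_r j : svec A b x (rshift m j) 0 = x j 0.
Proof. by rewrite /svec /Atil /dvec mul_col_mx mul1mx !mxE -[rshift m j]/(unsplit (inr j)) unsplitK mxE subr0. Qed.
Lemma vlast_l j0 i : (forall j : 'I_n, (j.+1 == n)%N = (j == j0)) ->
  vlast A (lshift n i) 0 = A i j0.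
Proof.
move=> H; rewrite /vlast mxE; case: pickP => [j1|] /=; rewrite ?H.
  by move/eqP->; rewrite /Atil mxE -[lshift n i]/(unsplit (inl i)) unsplitK.
by move/(_ j0) => /=; rewrite H eqxx.
Qed.
Lemma vlast_r j0 j : (forall j : 'I_n, (j.+1 == n)%N = (j == j0)) ->
  vlast A (rshift m j) 0 = (j == j0)%:R.
Proof.
move=> H; rewrite /vlast mxE; case: pickP => [j1|] /=; rewrite ?H.
  by move/eqP->; rewrite /Atil mxE -[rshift m j]/(unsplit (inr j)) unsplitK mxE eq_sym.
by move/(_ j0) => /=; rewrite H eqxx.
Qed.
End S.

Lemma addmod_inj n (e : 'I_n) k : (k <= n)%N ->
  injective (fun t : 'I_k => addmod e t).
Proof.
move=> Hk t1 t2 /(congr1 val) /= /eqP; rewrite eqn_modDl => /eqP.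
rewrite !modn_small; last 2 first.
- exact: leq_trans (ltn_ord t2) Hk.
- exact: leq_trans (ltn_ord t1) Hk.
by move/val_inj.
Qed.

Lemma sum_window (R : realType) n (e : 'I_n) k (g : 'I_n -> R) : (k <= n)%N ->
  \sum_(j < n) (if [exists t : 'I_k, addmod e t == j] then 1 else 0) * g j
  = \sum_(t < k) g (addmod e t).
Proof.
move=> Hk.
rewrite (eq_bigr (fun j => if j \in [set addmod e t | t : 'I_k] then g j else 0)); last first.
  move=> j _; case: ifP => /existsP.
    by case=> t /eqP <-; rewrite mul1r imset_f.
  move=> Hn; rewrite mul0r; case: ifP => // /imsetP [t _ Ht].
  by case: Hn; exists t; rewrite Ht.
rewrite -big_mkcond /= big_imset //=.
by move=> t1 t2 _ _; apply: addmod_inj.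
Qed.

Lemma sum_delta (R : realType) n (j0 : 'I_n) (F : 'I_n -> R) :
  \sum_(j < n) F j * (j == j0)%:R = F j0.
Proof.
rewrite (bigD1 j0) //= eqxx mulr1 big1 ?addr0 // => j /negbTE ->.
by rewrite mulr0.
Qed.

Lemma scE (R : realType) p (M V : 'cV[R]_p) a c r :
  (a *: (M - c *: V)) r 0 = a * (M r 0 - c * V r 0).
Proof. by rewrite !mxE. Qed.
Lemma scE' (R : realType) p (M V : 'cV[R]_p) a c r :
  (a *: (M + c *: V)) r 0 = a * (M r 0 + c * V r 0).
Proof. by rewrite !mxE. Qed.

Theorem lemma5p1 (R : realType) (m n : nat) (A : 'M[R]_(m, n))
  (ell : 'I_m -> 'I_n) (k : 'I_m -> nat) (alpha : nat) (x : 'cV[R]_n) :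
  circular_wrt A ell k -> (0 < alpha)%N ->
  inQ A (const_mx alpha%:R) x ->
  forall i : 'I_m,
    cplus A (const_mx alpha%:R) x (lshift n i) 0
      - \sum_(t < k i) cplus A (const_mx alpha%:R) x (rshift m (addmod (ell i) t)) 0
      = - (mu x * alpha%:R)
    /\
    cminus A (const_mx alpha%:R) x (lshift n i) 0
      - \sum_(t < k i) cminus A (const_mx alpha%:R) x (rshift m (addmod (ell i) t)) 0
      = - ((1 - mu x) * alpha%:R).
Proof.
move=> Hc Ha [Hx0 HAx] i.
case: (Hc i) => Hk2 Hkn HA.
have Hk : (k i <= n)%N by apply: leq_trans Hkn (leq_subr 1 n).
have n0 := ord_pos (ell i).
have Hj0 : (n.-1 < n)%N by rewrite prednK.
pose j0 := Ordinal Hj0.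
have H : forall j : 'I_n, (j.+1 == n) = (j == j0).
  by move=> j; rewrite -(inj_eq val_inj) /=; case: n {A HA HAx Hc ell x Hx0 Hk Hkn n0 Hj0 j0} j => [[]|n'] j //=.
set f := addmod (ell i).
set S := \sum_(t < k i) x (f t) 0.
set V := \sum_(t < k i) ((f t == j0)%:R : R).
have HS : \sum_j A i j * x j 0 = S.
  rewrite /S /f -(@sum_window R n (ell i) (k i) (fun j => x j 0) Hk); apply: eq_bigr => j _; by rewrite HA.
have HV : A i j0 = V.
  rewrite -(@sum_delta R n j0 (A i)) /V /f -(@sum_window R n (ell i) (k i) (fun j => (j == j0)%:R) Hk).
  by apply: eq_bigr => j _; rewrite HA.
set mu0 := mu x.
split.
- rewrite (eq_bigr (fun t : 'I_(k i) => mu0 * (x (f t) 0 - (1 - mu0) * ((f t == j0)%:R)))); last first.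
    by move=> t _; rewrite /cplus scE svec_r (@vlast_r _ _ _ _ _ _ H).
  rewrite /cplus scE svec_l (@vlast_l _ _ _ _ _ _ H) HV !mxE HS -mulr_sumr sumrB -mulr_sumr.
  rewrite -/S -/V /mu0; ring.
- rewrite (eq_bigr (fun t : 'I_(k i) => (1 - mu0) * (x (f t) 0 + mu0 * ((f t == j0)%:R)))); last first.
    by move=> t _; rewrite /cminus scE' svec_r (@vlast_r _ _ _ _ _ _ H).
  rewrite /cminus scE' svec_l (@vlast_l _ _ _ _ _ _ H) HV !mxE HS -mulr_sumr big_split /= -mulr_sumr.
  rewrite -/S -/V /mu0; ring.
Qed.
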